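(* Let $G=(V,E)$ be a graph with nonnegative edge lengths $l_e$, root $r$, and integer demands $d_v>0$ on a set of demand nodes, with total demand $D$. Fix $\epsilon>0$, $\gamma>1$, $\delta>1$, let $K=\lceil \log_{1+\epsilon} D\rceil$, $M_i=(1+\epsilon)^i$, $A_i(x)=\min\{x,M_i\}$, and let $T_i^*$ be an optimal routing tree for $A_i$ with rent cost $R_i^*$ and normalized buy cost $B_i^*$ ($0\le i\le K$). Run the following procedure: (1) for each $i$ let $T_i$ be a routing tree returned by an SSRoB approximation algorithm for cost function $A_i$; (2) for $i=1,\dots,K$ in increasing order, if $A_i(T_{i-1})<A_i(T_i)$ set $T_i\leftarrow T_{i-1}$; (3) for $i=K-1,\dots,0$ in decreasing order, if $A_i(T_{i+1})<A_i(T_i)$ set $T_i\leftarrow T_{i+1}$; (4) compute the rent cost $R_i$ and normalized buy cost $B_i$ of each resulting $T_i$; (5) set $L_B=\emptyset$, $B=\infty$, and for $i=0,\dots,K$ in increasing order, if $B_i<B/\gamma$ then add $i$ to $L_B$ and set $B\leftarrow B_i$; (6) set $L=\emptyset$, $R=\infty$, and for each $i\in L_B$ in decreasing order, if $R_i<R/\delta$ then add $i$ to $L$ and set $R\leftarrow R_i$. Suppose there exist a routing tree $T$ and constants $c_B,c_R$ such that for every $i\in L$ there is a partition of the edges of $T$ into two sets $T_{B_i}$ and $T_{R_i}$ with $A_0(T_{B_i})\le c_B B_i$ and $A_K(T_{R_i})\le c_R R_i$, and suppose that for all $i$, $R_i\le \mu_R R_i^*+\mu_B M_iB_i^*$ and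 $M_iB_i\le \nu_R R_i^*+\nu_B M_iB_i^*$. Then for all $k\in\{0,\dots,K\}$, $A_k(T)\le \max\{c_R\delta\mu_R+c_B\gamma\nu_R,\; c_R\delta\mu_B+c_B\gamma\nu_B\}\,A_k(T_k^* )$.
   Context: A routing tree is a tree in $G$ containing $r$ and all demand nodes; each demand node $v$ sends $d_v$ units of flow to $r$ along its unique tree path, and $x_e$ denotes the total flow on edge $e$. For a function $f$ and a routing tree $T$, $f(T)=\sum_{e\in T} l_e f(x_e)$; for a subset $S$ of edges of $T$, $f(S)=\sum_{e\in S} l_e f(x_e)$ with $x_e$ the flows in $T$. The single-sink rent-or-buy (SSRoB) problem with parameter $M$ is to find a routing tree minimizing $A(T)$ for $A(x)=\min\{x,M\}$. For a routing tree $T_i$ with flows $x_e$, its rent cost is $R_i=\sum_{e\in T_i,\,x_e<M_i} l_e A_i(x_e)$ and its normalized buy cost is $B_i=\sum_{e\in T_i,\,x_e\ge M_i} l_e$. *)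

(* Defs.v *)
From HB Require Import structures.
From mathcomp Require Import all_boot all_order all_algebra.
From mathcomp Require Import all_classical all_reals exp.
Set Implicit Arguments. Unset Strict Implicit. Unset Printing Implicit Defensive.
Import Order.TTheory GRing.Theory Num.Theory.
Local Open Scope ring_scope.

(* Graph G = (V,E): edges e : E with endpoints ends e (undirected; parallel
   edges allowed).  Root r, demand node set Dn, demands d, lengths l. *)
Section SSRoB.
Variables (R : realType) (V E : finType) (ends : E -> V * V) (r : V)
  (Dn : {set V}) (d : V -> nat) (l : E -> R).

Definition adj (S : {set E}) : rel V :=
  fun u w => [exists e in S, (ends e == (u, w)) || (ends e == (w, u))].
Definition conn (S : {set E}) (u w : V) : bool := connect (adj S) u w.

(* T is a tree (connected, acyclic) whose vertex set contains r and all
   demand nodes *)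
Definition routing_tree (T : {set E}) : bool :=
  [&& [forall v in Dn, conn T v r],
      [forall e in T, conn T (ends e).1 r && conn T (ends e).2 r] &
      [forall e in T, ~~ conn (T :\ e) (ends e).1 (ends e).2]].

(* flow on edge e of tree T: total demand of the demand nodes whose tree path
   to r uses e, i.e. that are separated from r when e is removed *)
Definition flow (T : {set E}) (e : E) : nat :=
  \sum_(v in Dn | ~~ conn (T :\ e) v r) d v.

Definition Acost (M : R) (T S : {set E}) : R :=
  \sum_(e in S) l e * Num.min (flow T e)%:R M.
Definition rent (M : R) (T : {set E}) : R :=
  \sum_(e in T | (flow T e)%:R < M) l e * Num.min (flow T e)%:R M.
Definition nbuy (M : R) (T : {set E}) : R :=
  \sum_(e in T | M <= (flow T e)%:R) l e.

Definition totD : nat := \sum_(v in Dn) d v.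

Definition Kof (eps : R) : nat := `|Num.ceil (ln (totD%:R) / ln (1 + eps))|%N.
Definition Mof (eps : R) (i : nat) : R := (1 + eps) ^+ i.

Variables (M : nat -> R) (K : nat) (T0 : nat -> {set E}).

Fixpoint fwd (i : nat) : {set E} :=
  match i with
  | 0 => T0 0
  | i'.+1 => let Tp := fwd i' in
      if Acost (M i) Tp Tp < Acost (M i) (T0 i) (T0 i) then Tp else T0 i
  end.

(* step (3): bwd_aux j is the tree at index K - j *)
Fixpoint bwd_aux (j : nat) : {set E} :=
  match j with
  | 0 => fwd K
  | j'.+1 => let i := (K - j'.+1)%N in let Tn := bwd_aux j' in
      if Acost (M i) Tn Tn < Acost (M i) (fwd i) (fwd i) then Tn else fwd i
  end.

Definition Tfin (i : nat) : {set E} := bwd_aux (K - i).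

Definition Bfin (i : nat) : R := nbuy (M i) (Tfin i).
Definition Rfin (i : nat) : R := rent (M i) (Tfin i).

(* one step of the threshold scan; None encodes the initial value infinity *)
Definition scan_step (c : R) (F : nat -> R) (st : seq nat * option R) (i : nat)
  : seq nat * option R :=
  let: (s, b) := st in
  if (if b is Some b' then F i < b' / c else true) then (rcons s i, Some (F i))
  else st.

Definition LB (gam : R) : seq nat :=
  (foldl (scan_step gam Bfin) ([::], None) (iota 0 K.+1)).1.
Definition Lset (gam del : R) : seq nat :=
  (foldl (scan_step del Rfin) ([::], None) (rev (LB gam))).1.

End SSRoB.

(* Main.v *)
Require Import Defs.
From HB Require Import structures.
From mathcomp Require Import all_boot all_order all_algebra.
From mathcomp Require Import all_classical all_reals exp.
From mathcomp Require Import lra.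
Import Order.TTheory GRing.Theory Num.Theory.
Local Open Scope ring_scope.

Lemma scanP (R : realType) (c : R) (F : nat -> R) (ord : rel nat) :
  1 <= c -> (forall i, 0 <= F i) -> reflexive ord -> transitive ord ->
  forall s o ob, sorted ord s -> (forall b, ob = Some b -> exists2 y, y \in o & b = F y) ->
  let st := foldl (scan_step c F) (o, ob) s in
  [/\ (forall b, st.2 = Some b -> exists2 y, y \in st.1 & b = F y),
      exists2 t, st.1 = o ++ t & subseq t s &
      forall x, x \in s -> exists2 y, y \in st.1 &
         F y <= c * F x /\ (y \in o \/ (y \in s /\ ord y x))].
Proof.
move=> c1 F0 oref otr; elim=> [|x s IH] o ob Hs Hinv /=.
  split => //; first by exists [::]; rewrite ?cats0.
have Hs' : sorted ord s := path_sorted Hs.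
have Hall : all (ord x) s := order_path_min otr Hs.
have c0 : 0 < c by apply: (lt_le_trans ltr01).
have Fc : F x <= c * F x by rewrite -{1}(mul1r (F x)) ler_wpM2r.
have added : (forall b, Some (F x) = Some b -> exists2 y, y \in rcons o x & b = F y).
  by move=> b [<-]; exists x => //; rewrite mem_rcons mem_head.
case: ob Hinv => [b|] Hinv /=; [case: ifP => Hc /=|].
- have [Hi [t Ht Hsub] Hx] := IH _ _ Hs' added.
  split => //; first by exists (x :: t); rewrite ?Ht ?cat_rcons //= eqxx.
  move=> z; rewrite in_cons => /orP[/eqP->|zs].
    by exists x; [rewrite Ht mem_cat mem_rcons mem_head | split=> //; right; rewrite mem_head].
  have [y yin [Fy Hy]] := Hx z zs; exists y => //; split => //.
  case: Hy => [|[ys oyz]]; last by right; rewrite in_cons ys orbT.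
  rewrite mem_rcons in_cons => /orP[/eqP->|yo]; last by left.
  by right; rewrite mem_head; split => //; apply: (allP Hall).
- have [Hi [t Ht Hsub] Hx] := IH _ _ Hs' Hinv.
  split => //; first by exists t => //; apply: subseq_trans Hsub (subseq_cons s x).
  move=> z; rewrite in_cons => /orP[/eqP->|zs].
    have [y yo Hb] := Hinv b erefl.
    exists y; first by rewrite Ht mem_cat yo.
    split; last by left.
    move: Hc; move/negbT; rewrite -leNgt ler_pdivrMr // mulrC => H.
    by rewrite -Hb.
  have [y yin [Fy Hy]] := Hx z zs; exists y => //; split => //.
  by case: Hy => [|[ys oyz]]; [left | right; rewrite in_cons ys orbT].
- have [Hi [t Ht Hsub] Hx] := IH _ _ Hs' added.
  split => //; first by exists (x :: t); rewrite ?Ht ?cat_rcons //= eqxx.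
  move=> z; rewrite in_cons => /orP[/eqP->|zs].
    by exists x; [rewrite Ht mem_cat mem_rcons mem_head | split=> //; right; rewrite mem_head].
  have [y yin [Fy Hy]] := Hx z zs; exists y => //; split => //.
  case: Hy => [|[ys oyz]]; last by right; rewrite in_cons ys orbT.
  rewrite mem_rcons in_cons => /orP[/eqP->|yo]; last by left.
  by right; rewrite mem_head; split => //; apply: (allP Hall).
Qed.

Section X.
Lemma A_split (R : realType) (V E : finType) (ends : E -> V * V) (r : V)
  (Dn : {set V}) (d : V -> nat) (l : E -> R) (M : R) (T : {set E}) :
  Acost ends r Dn d l M T T = rent ends r Dn d l M T + M * nbuy ends r Dn d l M T.
Proof.
rewrite /Acost /rent /nbuy (bigID (fun e => (flow ends r Dn d T e)%:R < M)) /=.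
congr (_ + _); rewrite big_distrr /=; apply: eq_big => e.
  by rewrite -leNgt.
by move=> /andP[_]; rewrite -leNgt => H; rewrite min_r // mulrC.
Qed.

Lemma A_le (R : realType) (V E : finType) (ends : E -> V * V) (r : V)
  (Dn : {set V}) (d : V -> nat) (l : E -> R) (hl : forall e, 0 <= l e) (M N : R) (T : {set E}) :
  Acost ends r Dn d l N T T <= rent ends r Dn d l M T + N * nbuy ends r Dn d l M T.
Proof.
rewrite /Acost /rent /nbuy (bigID (fun e => (flow ends r Dn d T e)%:R < M)) /=.
apply: lerD.
  apply: ler_sum => e /andP[_ H]; apply: ler_wpM2l => //.
  by rewrite (min_l (ltW H)) ge_min lexx.
rewrite big_distrr /=; under eq_bigl => e do rewrite -leNgt.
apply: ler_sum => e _.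
rewrite [X in _ <= X]mulrC; apply: ler_wpM2l => //; by rewrite ge_min lexx orbT.
Qed.

Lemma A_mono (R : realType) (V E : finType) (ends : E -> V * V) (r : V)
  (Dn : {set V}) (d : V -> nat) (l : E -> R) (hl : forall e, 0 <= l e) (M N : R) (T S : {set E}) :
  M <= N -> Acost ends r Dn d l M T S <= Acost ends r Dn d l N T S.
Proof.
move=> MN; apply: ler_sum => e _; apply: ler_wpM2l => //.
rewrite le_min !ge_min lexx /=. by rewrite MN orbT.
Qed.

Lemma A_scale (R : realType) (V E : finType) (ends : E -> V * V) (r : V)
  (Dn : {set V}) (d : V -> nat) (l : E -> R) (hl : forall e, 0 <= l e) (M : R) (T S : {set E}) :
  1 <= M -> Acost ends r Dn d l M T S <= M * Acost ends r Dn d l 1 T S.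
Proof.
move=> M1; rewrite /Acost big_distrr /=; apply: ler_sum => e _.
rewrite mulrCA; apply: ler_wpM2l => //.
case: (flow ends r Dn d T e) => [|n].
  have M0 : 0 <= M by apply: le_trans M1.
  by rewrite !min_l //= ?mulr0.
rewrite [Num.min _ 1]min_r ?mulr1 ?ge_min ?lexx ?orbT //.
by rewrite ler1n.
Qed.
End X.

Section Y.
Lemma Tfin_facts (R : realType) (V E : finType) (ends : E -> V * V) (r : V)
  (Dn : {set V}) (d : V -> nat) (l : E -> R) (M : nat -> R) (K : nat) (T0 : nat -> {set E}) :
  let f := fun m (X : {set E}) => Acost ends r Dn d l m X X in
  let Tf := Tfin ends r Dn d l M K T0 in
  let fw := fwd ends r Dn d l M T0 in
  (forall i, f (M i.+1) (fw i.+1) <= f (M i.+1) (fw i)) /\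
  (forall i, (i <= K)%N -> f (M i) (Tf i) <= f (M i) (fw i)) /\
  (forall i, (i < K)%N -> Tf i = if f (M i) (Tf i.+1) < f (M i) (fw i) then Tf i.+1 else fw i).
Proof.
move=> f Tf fw.
have Hstep : forall i, (i < K)%N -> Tf i = if f (M i) (Tf i.+1) < f (M i) (fw i) then Tf i.+1 else fw i.
  move=> i iK; rewrite /Tf /Tfin.
  have -> : (K - i = (K - i.+1).+1)%N by rewrite subnSK.
  rewrite /=. by rewrite subnSK // subKn // ltnW.
split; [|split] => //.
  by move=> i /=; case: ifP => // /negbT; rewrite -leNgt.
move=> i; rewrite leq_eqVlt => /orP[/eqP->|iK].
  by rewrite /Tf /Tfin subnn /=.
by rewrite Hstep //; case: ifP => // /ltW.
Qed.
End Y.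

Section Z.
Lemma Tfin_mono (R : realType) (V E : finType) (ends : E -> V * V) (r : V)
  (Dn : {set V}) (d : V -> nat) (l : E -> R) (M : nat -> R) (K : nat) (T0 : nat -> {set E}) :
  (forall e, 0 <= l e) -> (forall i, 0 <= M i) -> (forall i, M i < M i.+1) ->
  let Tf := Tfin ends r Dn d l M K T0 in
  forall i j, (i <= j)%N -> (j <= K)%N ->
  rent ends r Dn d l (M i) (Tf i) <= rent ends r Dn d l (M j) (Tf j) /\
  nbuy ends r Dn d l (M j) (Tf j) <= nbuy ends r Dn d l (M i) (Tf i).
Proof.
move=> hl M0 Mlt Tf.
have [F1 [F2 F3]] := @Tfin_facts _ _ _ ends r Dn d l M K T0.
have step : forall i, (i < K)%N ->
  rent ends r Dn d l (M i) (Tf i) <= rent ends r Dn d l (M i.+1) (Tf i.+1) /\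
  nbuy ends r Dn d l (M i.+1) (Tf i.+1) <= nbuy ends r Dn d l (M i) (Tf i).
  move=> i iK.
  set f := fun m (X : {set E}) => Acost ends r Dn d l m X X.
  have h1 : f (M i) (Tf i) <= f (M i) (Tf i.+1).
    rewrite /Tf (F3 i iK); case: ifP => // /negbT; rewrite -leNgt //.
  have h2 : f (M i.+1) (Tf i.+1) <= f (M i.+1) (Tf i).
    rewrite /Tf (F3 i iK); case: ifP => // _.
    apply: le_trans (F2 i.+1 iK) _; exact: F1.
  have h1' := le_trans h1 (@A_le _ _ _ ends r Dn d l hl (M i.+1) (M i) (Tf i.+1)).
  have h2' := le_trans h2 (@A_le _ _ _ ends r Dn d l hl (M i) (M i.+1) (Tf i)).
  rewrite /f A_split in h1'. rewrite /f A_split in h2'.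
  have a0 := M0 i; have ab := Mlt i.
  move: h1' h2'.
  set Rf := rent _ _ _ _ _ (M i) _. set Rg := rent _ _ _ _ _ (M i.+1) _.
  set Bf := nbuy _ _ _ _ _ (M i) _. set Bg := nbuy _ _ _ _ _ (M i.+1) _.
  move=> h1' h2'.
  move: h1' h2' a0 ab; clear h1 h2; clearbody Rf Rg Bf Bg.
  move: (M i) (M i.+1) => a b h1' h2' a0 ab.
  have HB : Bg <= Bf by clear -h1' h2' a0 ab; nra.
  split => //; clear -h1' h2' a0 ab HB; nra.
have gen : forall n i, (i + n <= K)%N ->
  rent ends r Dn d l (M i) (Tf i) <= rent ends r Dn d l (M (i + n)%N) (Tf (i + n)%N) /\
  nbuy ends r Dn d l (M (i + n)%N) (Tf (i + n)%N) <= nbuy ends r Dn d l (M i) (Tf i).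
  elim => [|n IH] i H; first by rewrite addn0; split.
  have H' : (i + n < K)%N by rewrite -addnS.
  have [IH1 IH2] := IH i (ltnW H').
  have [S1 S2] := step (i + n)%N H'.
  rewrite addnS; split; [exact: le_trans S1 | exact: le_trans IH2].
move=> i j ij jK; have := gen (j - i)%N i; rewrite subnKC //; by apply.
Qed.
End Z.

Theorem corollary6 (R : realType) (V E : finType) (ends : E -> V * V) (r : V)
  (Dn : {set V}) (d : V -> nat) (l : E -> R) (eps gam del : R)
  (T0 Topt : nat -> {set E}) (T : {set E})
  (cB cR muR muB nuR nuB : R) :
  (forall e, 0 <= l e) ->
  (forall v, v \in Dn -> (0 < d v)%N) ->
  0 < eps -> 1 < gam -> 1 < del ->
  0 <= cB -> 0 <= cR -> 0 <= muR -> 0 <= muB -> 0 <= nuR -> 0 <= nuB ->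
  let K := Kof Dn d eps in
  let M := Mof eps in
  let RT := routing_tree ends r Dn in
  let A := Acost ends r Dn d l in
  (* T_i^* : optimal routing trees for A_i *)
  (forall i, (i <= K)%N -> RT (Topt i) /\
     forall T', RT T' -> A (M i) (Topt i) (Topt i) <= A (M i) T' T') ->
  (* step (1): arbitrary routing trees returned by the approximation algorithm *)
  (forall i, (i <= K)%N -> RT (T0 i)) ->
  let Tf := Tfin ends r Dn d l M K T0 in
  let Ri := fun i => rent ends r Dn d l (M i) (Tf i) in
  let Bi := fun i => nbuy ends r Dn d l (M i) (Tf i) in
  let Rs := fun i => rent ends r Dn d l (M i) (Topt i) in
  let Bs := fun i => nbuy ends r Dn d l (M i) (Topt i) in
  let L := Lset ends r Dn d l M K T0 gam del in
  RT T ->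
  (forall i, i \in L -> exists TB TR : {set E},
     [/\ TB :|: TR = T, [disjoint TB & TR],
         A (M 0%N) T TB <= cB * Bi i & A (M K) T TR <= cR * Ri i]) ->
  (forall i, (i <= K)%N -> Ri i <= muR * Rs i + muB * (M i * Bs i)) ->
  (forall i, (i <= K)%N -> M i * Bi i <= nuR * Rs i + nuB * (M i * Bs i)) ->
  forall k, (k <= K)%N ->
    A (M k) T T <= Num.max (cR * del * muR + cB * gam * nuR)
                           (cR * del * muB + cB * gam * nuB)
                   * A (M k) (Topt k) (Topt k).
Proof.
move=> hl hd heps hgam hdel hcB hcR hmuR hmuB hnuR hnuB K M RT A Hopt HT0 Tf Ri Bi Rs Bs L
  HT Hpart HR HB k hk.
have M1 : forall i, 1 <= M i.
  by move=> i; rewrite /M /Mof exprn_ege1 // lerDl ltW.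
have M0 : forall i, 0 <= M i by move=> i; apply: le_trans (M1 i).
have Mlt : forall i, M i < M i.+1.
  move=> i; rewrite /M /Mof exprS; have := M1 i; rewrite /M /Mof => h; nra.
have Hmono := @Tfin_mono _ _ _ ends r Dn d l M K T0 hl M0 Mlt.
have rent0 : forall m X, 0 <= m -> 0 <= rent ends r Dn d l m X.
  move=> m X m0; apply: sumr_ge0 => e _; apply: mulr_ge0 => //.
  by rewrite le_min ler0n.
have nbuy0 : forall m X, 0 <= nbuy ends r Dn d l m X.
  by move=> m X; apply: sumr_ge0 => e _.
have [_ [t Ht Hsub] Hx] := @scanP R gam (Bfin ends r Dn d l M K T0) leq
  (ltW hgam) (fun i => nbuy0 _ _) leqnn leq_trans (iota 0 K.+1) [::] None
  (iota_sorted 0 K.+1) (fun b (H : None = Some b) => ltac:(discriminate)).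
have LBt : LB ends r Dn d l M K T0 gam = t by rewrite /LB Ht.
have kin : k \in iota 0 K.+1 by rewrite mem_iota.
have [i1 i1LB [Bi1 Hi1]] := Hx k kin.
rewrite -/(LB ends r Dn d l M K T0 gam) in i1LB.
have {Hi1} [_ i1k] : i1 \in iota 0 K.+1 /\ (i1 <= k)%N.
  by case: Hi1 => [//|].
have LBsort : sorted leq (LB ends r Dn d l M K T0 gam).
  by rewrite LBt; exact: (@subseq_sorted _ leq leq_trans _ _ Hsub (iota_sorted 0 K.+1)).
have LBK : forall y, y \in LB ends r Dn d l M K T0 gam -> (y <= K)%N.
  by move=> y; rewrite LBt => /(mem_subseq Hsub); rewrite mem_iota.
have [_ [t' Ht' Hsub'] Hx'] := @scanP R del (Rfin ends r Dn d l M K T0) (fun a b => (b <= a)%N)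
  (ltW hdel) (fun i => rent0 _ _ (M0 i)) (fun a => leqnn a)
  (fun y x z h1 h2 => leq_trans h2 h1) (rev (LB ends r Dn d l M K T0 gam)) [::] None
  (ltac:(by rewrite rev_sorted)) (fun b (H : None = Some b) => ltac:(discriminate)).
have [i2 i2L [Ri2 Hi2]] := Hx' i1 (ltac:(by rewrite mem_rev)).
have {Hi2} [i2LB i12] : i2 \in rev (LB ends r Dn d l M K T0 gam) /\ (i1 <= i2)%N.
  by case: Hi2 => [//|].
rewrite mem_rev in i2LB.
have i2K := LBK _ i2LB.
have i1K := leq_trans i1k hk.
have [TB [TR [HU Hdis HTB HTR]]] := Hpart i2 i2L.
have [Rm1 _] := Hmono i1 k i1k hk.
have [_ Bm2] := Hmono i1 i2 i12 i2K.
rewrite /Bfin /Rfin -/Tf -/(Bi _) -/(Bi _) in Bi1 *.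
rewrite /Rfin -/Tf in Ri2.
have Bi2k : Bi i2 <= gam * Bi k by apply: le_trans Bm2 Bi1.
have Ri2k : Ri i2 <= del * Ri k.
  apply: le_trans Ri2 _; apply: ler_wpM2l; [exact: ltW (lt_trans ltr01 hdel)| exact: Rm1].
have Hsplit : A (M k) T T = A (M k) T TB + A (M k) T TR.
  have -> : A (M k) T T = A (M k) T (TB :|: TR) by rewrite HU.
  rewrite /A /Acost (eq_bigl [predU TB & TR]) ?bigU //.
  by move=> e; rewrite !inE.
have HA1 : A (M k) T TB <= M k * (cB * Bi i2).
  apply: le_trans (@A_scale _ _ _ ends r Dn d l hl (M k) T TB (M1 k)) _.
  by apply: ler_wpM2l => //; rewrite /M /Mof expr0 in HTB.
have HA2 : A (M k) T TR <= cR * Ri i2.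
  apply: le_trans HTR; apply: A_mono => //.
  have [_ ?] : (k <= K)%N /\ M k <= M K.
    split => //; move: hk; rewrite leq_eqVlt => /orP[/eqP->//|].
    rewrite /M /Mof => /ltnW kK; rewrite -(subnKC kK) exprD.
    by rewrite ler_peMr ?exprn_ege1 ?lerDl ?ltW // exprn_gt0 // addr_gt0.
  by [].
have HAopt : A (M k) (Topt k) (Topt k) = Rs k + M k * Bs k by rewrite /A A_split.
have Rsk0 : 0 <= Rs k := rent0 _ _ (M0 k).
have Bsk0 : 0 <= M k * Bs k := mulr_ge0 (M0 k) (nbuy0 _ _).
have HRk := HR k hk. have HBk := HB k hk.
have Bk0 : 0 <= Bi k := nbuy0 _ _.
have Rk0 : 0 <= Ri k := rent0 _ _ (M0 k).
have Mk0 := M0 k.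
rewrite Hsplit HAopt.
set mx := Num.max _ _.
have mx1 : cR * del * muR + cB * gam * nuR <= mx by rewrite le_max lexx.
have mx2 : cR * del * muB + cB * gam * nuB <= mx by rewrite le_max lexx orbT.
have c1 : M k * (cB * Bi i2) <= cB * gam * (M k * Bi k).
  rewrite mulrCA -mulrA; apply: ler_wpM2l => //.
  rewrite mulrCA; apply: ler_wpM2l => //.
have c2 : cR * Ri i2 <= cR * del * Ri k by rewrite -mulrA ler_wpM2l.
have g0 : 0 <= cB * gam by apply: mulr_ge0 => //; apply: ltW (lt_trans ltr01 hgam).
have d0 : 0 <= cR * del by apply: mulr_ge0 => //; apply: ltW (lt_trans ltr01 hdel).
have c3 : cB * gam * (M k * Bi k) <= cB * gam * (nuR * Rs k + nuB * (M k * Bs k)) by apply: ler_wpM2l.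
have c4 : cR * del * Ri k <= cR * del * (muR * Rs k + muB * (M k * Bs k)) by apply: ler_wpM2l.
apply: le_trans (lerD HA1 HA2) _.
apply: le_trans (lerD (le_trans c1 c3) (le_trans c2 c4)) _.
move: mx1 mx2 Rsk0 Bsk0; clearbody mx.
move: (Rs k) (M k * Bs k) (cB * gam) (cR * del) => a b g dd h1 h2 ha hb.
clear -h1 h2 ha hb; nra.
Qed.
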